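(* Consider the system of ordinary differential equations \[ \dot u=r_{1}u(1-u)-a_{12}uv-a_{13}uw,\qquad \dot v=r_{2}v(1-v)+a_{21}uv,\qquad \dot w=-\mu w+a_{31}uw, \] with all parameters $r_1,r_2,\mu,a_{12},a_{13},a_{21},a_{31}$ positive. Assume \[ r_{1}r_{2}a_{31}-r_{1}r_{2}\mu-a_{12}a_{31}r_{2}-a_{12}a_{21}\mu>0 . \] Then the positive equilibrium \[ E_{*}=(u_{*},v_{*},w_{*})=\left(\frac{\mu}{a_{31}},\;1+\frac{a_{21}\mu}{a_{31}r_{2}},\;\frac{r_{1}r_{2}a_{31}-r_{1}r_{2}\mu-a_{12}a_{31}r_{2}-a_{12}a_{21}\mu}{a_{13}a_{31}r_{2}}\right) \] exists and it is globally asymptotically stable, i.e. it is stable and every solution with $u(0),v(0),w(0)>0$ converges to $E_*$ as $t\to\infty$.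
   Context: $u,v,w$ denote population densities of three species; solutions are considered in the positive orthant. *)

(* Defs.v *)
From Stdlib Require Import Reals.
From Coquelicot Require Import Coquelicot.
Open Scope R_scope.

Definition fu (r1 a12 a13 : R) (u v w : R) : R := r1 * u * (1 - u) - a12 * u * v - a13 * u * w.
Definition fv (r2 a21 : R) (u v w : R) : R := r2 * v * (1 - v) + a21 * u * v.
Definition fw (mu a31 : R) (u v w : R) : R := - mu * w + a31 * u * w.

Definition is_solution (r1 r2 mu a12 a13 a21 a31 : R) (u v w : R -> R) : Prop :=
  forall t, 0 <= t ->
    is_derive u t (fu r1 a12 a13 (u t) (v t) (w t)) /\
    is_derive v t (fv r2 a21 (u t) (v t) (w t)) /\
    is_derive w t (fw mu a31 (u t) (v t) (w t)).

Definition ustar (mu a31 : R) : R := mu / a31.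
Definition vstar (r2 mu a21 a31 : R) : R := 1 + a21 * mu / (a31 * r2).
Definition wstar (r1 r2 mu a12 a13 a21 a31 : R) : R :=
  (r1 * r2 * a31 - r1 * r2 * mu - a12 * a31 * r2 - a12 * a21 * mu) / (a13 * a31 * r2).

Definition dist3 (x y z x0 y0 z0 : R) : R :=
  Rmax (Rabs (x - x0)) (Rmax (Rabs (y - y0)) (Rabs (z - z0))).

(* Main.v *)
Require Import Defs.
From Stdlib Require Import Reals Lra Psatz Classical.
From Coquelicot Require Import Coquelicot.
Open Scope R_scope.


Lemma ln_le_sub1 x : 0 < x -> ln x <= x - 1.
Proof. intros Hx. pose proof (exp_ineq1_le (ln x)). rewrite exp_ln in H; lra. Qed.

Lemma ln_lt_sub1 x : 0 < x -> x <> 1 -> ln x < x - 1.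
Proof. intros Hx H1. assert (ln x <> 0).
  { intro E. apply H1. rewrite <- (exp_ln x Hx), E. apply exp_0. }
  pose proof (exp_ineq1 (ln x) H). rewrite exp_ln in H0; lra. Qed.

Lemma deriv_cont f x l : is_derive f x l -> forall eps, 0 < eps ->
  exists d, 0 < d /\ forall y, Rabs (y - x) < d -> Rabs (f y - f x) < eps.
Proof.
  intros H eps He. apply is_derive_Reals in H.
  assert (C : continuity_pt f x) by (apply derivable_continuous_pt; exists l; exact H).
  destruct (C eps He) as [d [Hd Hd']]. exists d; split; auto.
  intros y Hy. destruct (Req_dec y x) as [->|Hne].
  - rewrite Rminus_diag, Rabs_R0; auto.
  - apply (Hd' y). split; [split; [exact I| auto] | exact Hy].
Qed.

Lemma decr f df a b : a <= b -> (forall x, a <= x <= b -> is_derive f x (df x)) ->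
  (forall x, a <= x <= b -> df x <= 0) -> f b <= f a.
Proof.
  intros Hab Hd Hs.
  destruct (MVT_gen f a b df) as [c [Hc E]].
  - intros x Hx. rewrite Rmin_left in Hx by lra. rewrite Rmax_right in Hx by lra. apply Hd; lra.
  - intros x Hx. rewrite Rmin_left in Hx by lra. rewrite Rmax_right in Hx by lra.
    apply derivable_continuous_pt. exists (df x). apply is_derive_Reals, Hd; lra.
  - rewrite Rmin_left in Hc by lra. rewrite Rmax_right in Hc by lra.
    assert (df c <= 0) by (apply Hs; lra). nra.
Qed.


Definition cont_at (f : R -> R) t := forall eps, 0 < eps ->
  exists d, 0 < d /\ forall y, Rabs (y - t) < d -> Rabs (f y - f t) < eps.

Lemma cont_lower f T m : cont_at f T -> 0 < T -> (forall s, 0 <= s < T -> m <= f s) -> m <= f T.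
Proof.
  intros C HT H. apply Rnot_lt_le; intro Hlt.
  destruct (C (m - f T)) as [d [Hd Hd']]; [lra|].
  set (s := Rmax 0 (T - d/2)).
  assert (0 <= s < T) by (unfold s; split; [apply Rmax_l| apply Rmax_lub_lt; lra]).
  assert (Rabs (s - T) < d).
  { assert (T - d/2 <= s) by apply Rmax_r. rewrite Rabs_left by lra. lra. }
  specialize (Hd' s H1). specialize (H s H0).
  apply Rabs_def2 in Hd'. lra.
Qed.

Lemma cont_pos_near f T : cont_at f T -> 0 < f T -> exists d, 0 < d /\ forall y, Rabs (y - T) < d -> 0 < f y.
Proof.
  intros C HT. destruct (C (f T) HT) as [d [Hd Hd']]. exists d; split; auto.
  intros y Hy. specialize (Hd' y Hy). apply Rabs_def2 in Hd'. lra.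
Qed.

Lemma stay_pos (u v w : R -> R) m : 0 < m ->
  (forall t, 0 <= t -> cont_at u t /\ cont_at v t /\ cont_at w t) ->
  0 < u 0 -> 0 < v 0 -> 0 < w 0 ->
  (forall t, 0 <= t -> (forall s, 0 <= s <= t -> 0 < u s /\ 0 < v s /\ 0 < w s) ->
      m <= u t /\ m <= v t /\ m <= w t) ->
  forall t, 0 <= t -> 0 < u t /\ 0 < v t /\ 0 < w t.
Proof.
  intros Hm Hc Hu0 Hv0 Hw0 Hb t1 Ht1. apply NNPP; intro Hn.
  set (P := fun t => forall s, 0 <= s <= t -> 0 < u s /\ 0 < v s /\ 0 < w s).
  set (E := fun t => 0 <= t /\ P t).
  assert (Bd : bound E).
  { exists t1. intros t [Ht Pt]. apply Rnot_lt_le; intro Hlt. apply Hn, Pt; lra. }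
  assert (Ne : exists x, E x).
  { exists 0. split; [lra|]. intros s Hs. replace s with 0 by lra. auto. }
  destruct (completeness E Bd Ne) as [T [HT1 HT2]].
  assert (E0 : E 0).
  { split; [lra|]. intros s Hs. replace s with 0 by lra. auto. }
  assert (T0 : 0 <= T) by (apply HT1; exact E0).
  assert (A : forall s, 0 <= s < T -> P s).
  { intros s Hs. apply NNPP; intro Hns.
    assert (T <= s). { apply HT2. intros e [He Pe]. apply Rnot_lt_le; intro Hlt.
      apply Hns. intros r Hr. apply Pe; lra. }
    lra. }
  assert (B : 0 < u T /\ 0 < v T /\ 0 < w T).
  { destruct (Req_dec T 0) as [->|HT0]; [auto|].
    destruct (Hc T T0) as [Cu [Cv Cw]].
    assert (Hs : forall s, 0 <= s < T -> m <= u s /\ m <= v s /\ m <= w s).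
    { intros s Hs. apply Hb; [lra|]. apply A; auto. }
    repeat split; [apply Rlt_le_trans with m; [lra| apply cont_lower; auto; [lra| intros; apply Hs; auto]]..]. }
  assert (PT : P T).
  { intros s Hs. destruct (Req_dec s T) as [->|Hne]; auto. apply (A s); lra. }
  destruct (Hc T T0) as [Cu [Cv Cw]].
  destruct B as [Bu [Bv Bw]].
  destruct (cont_pos_near u T Cu Bu) as [d1 [Hd1 H1]].
  destruct (cont_pos_near v T Cv Bv) as [d2 [Hd2 H2]].
  destruct (cont_pos_near w T Cw Bw) as [d3 [Hd3 H3]].
  set (eta := Rmin d1 (Rmin d2 d3)).
  assert (eta <= d1 /\ eta <= d2 /\ eta <= d3 /\ 0 < eta).
  { unfold eta. repeat split; try apply Rmin_l.
    - eapply Rle_trans; [apply Rmin_r| apply Rmin_l].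
    - eapply Rle_trans; [apply Rmin_r| apply Rmin_r].
    - apply Rmin_pos; auto. apply Rmin_pos; auto. }
  assert (E (T + eta/2)).
  { split; [lra|]. intros s Hs. destruct (Rle_lt_dec s T).
    - apply PT; lra.
    - assert (Rabs (s - T) < eta) by (rewrite Rabs_right; lra).
      repeat split; [apply H1|apply H2|apply H3]; lra. }
  specialize (HT1 _ H0). lra.
Qed.


Definition phi (s x : R) := x - s - s * (ln x - ln s).

Lemma ln_diff_le x y : 0 < x -> 0 < y -> ln x - ln y <= x / y - 1.
Proof. intros. rewrite <- ln_div by auto. apply ln_le_sub1. apply Rdiv_lt_0_compat; auto. Qed.

Lemma ln_diff_lt x y : 0 < x -> 0 < y -> x <> y -> ln x - ln y < x / y - 1.
Proof. intros. rewrite <- ln_div by auto. apply ln_lt_sub1. apply Rdiv_lt_0_compat; auto.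
  intro E. apply H1. field_simplify_eq in E; lra. Qed.

Lemma phi_nonneg s x : 0 < s -> 0 < x -> 0 <= phi s x.
Proof. intros. unfold phi. pose proof (ln_diff_le x s H0 H).
  assert (s * (ln x - ln s) <= s * (x / s - 1)) by (apply Rmult_le_compat_l; lra).
  replace (s * (x / s - 1)) with (x - s) in H2 by (field; lra). lra. Qed.

Lemma phi_pos s x : 0 < s -> 0 < x -> x <> s -> 0 < phi s x.
Proof. intros. unfold phi. pose proof (ln_diff_lt x s H0 H H1).
  assert (s * (ln x - ln s) < s * (x / s - 1)) by (apply Rmult_lt_compat_l; lra).
  replace (s * (x / s - 1)) with (x - s) in H3 by (field; lra). lra. Qed.

Lemma phi_quad s x : 0 < s -> 0 < x -> phi s x <= (x - s)^2 / x.
Proof. intros. unfold phi. pose proof (ln_diff_le s x H H0).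
  assert (s * (ln s - ln x) <= s * (s / x - 1)) by (apply Rmult_le_compat_l; lra).
  replace ((x - s)^2 / x) with (x - s + s * (s / x - 1)) by (field; lra). lra. Qed.

Lemma phi_lower s x B : 0 < s -> 0 < x -> phi s x <= B -> s * exp (- (B + s) / s) <= x.
Proof. intros Hs Hx HB. unfold phi in HB.
  assert (K : - (B + s) / s <= ln (x / s)).
  { rewrite ln_div by auto. apply (Rmult_le_reg_l s); auto.
    replace (s * (- (B + s) / s)) with (- (B + s)) by (field; lra). lra. }
  assert (exp (- (B + s) / s) <= x / s).
  { destruct (Rle_lt_or_eq_dec _ _ K) as [Hl|He].
    - left. rewrite <- (exp_ln (x/s)) by (apply Rdiv_lt_0_compat; auto). apply exp_increasing; auto.
    - rewrite He, exp_ln by (apply Rdiv_lt_0_compat; auto). lra. }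
  apply (Rmult_le_compat_l s) in H; [|lra].
  replace (s * (x / s)) with x in H by (field; lra). lra. Qed.

Lemma ln_half y : 0 < y -> ln y <= y / 2.
Proof. intros. replace (ln y) with (ln (y/2) + ln 2).
  - pose proof (ln_le_sub1 (y/2) ltac:(lra)). pose proof (ln_le_sub1 2 ltac:(lra)). lra.
  - rewrite ln_div by lra. ring. Qed.

Lemma phi_upper s x B : 0 < s -> 0 < x -> phi s x <= B -> x <= 2 * (B + s).
Proof. intros Hs Hx HB. unfold phi in HB. rewrite <- ln_div in HB by auto.
  pose proof (ln_half (x/s) ltac:(apply Rdiv_lt_0_compat; auto)).
  assert (s * ln (x/s) <= s * (x / s / 2)) by (apply Rmult_le_compat_l; lra).
  replace (s * (x / s / 2)) with (x/2) in H0 by (field; lra). lra. Qed.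

Lemma phi_away s x e : 0 < s -> 0 < e < s -> 0 < x -> e <= Rabs (x - s) ->
  Rmin (phi s (s + e)) (phi s (s - e)) <= phi s x.
Proof. intros Hs He Hx Hxe. unfold Rabs in Hxe. destruct (Rcase_abs (x - s)).
  - eapply Rle_trans; [apply Rmin_r|]. unfold phi. set (t := s - e).
    pose proof (ln_diff_le x t Hx ltac:(unfold t; lra)).
    assert (s * (ln x - ln t) <= s * (x / t - 1)) by (apply Rmult_le_compat_l; lra).
    assert (s * (x / t - 1) = (x - t) * (s / t)) by (field; unfold t; lra).
    assert ((t - x) * (s / t - 1) >= 0).
    { apply Rle_ge, Rmult_le_pos; [unfold t; lra|].
      assert (1 <= s / t); [|lra]. apply (Rmult_le_reg_r t); [unfold t; lra|].
      field_simplify; unfold t; lra. }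
    assert (phi_t : t - s - s * (ln t - ln s) = t - s - s * (ln t - ln s)) by reflexivity.
    nra.
  - eapply Rle_trans; [apply Rmin_l|]. unfold phi. set (t := s + e).
    pose proof (ln_diff_le x t Hx ltac:(unfold t; lra)).
    assert (s * (ln x - ln t) <= s * (x / t - 1)) by (apply Rmult_le_compat_l; lra).
    assert (s * (x / t - 1) = (x - t) * (s / t)) by (field; unfold t; lra).
    assert ((x - t) * (1 - s / t) >= 0).
    { apply Rle_ge, Rmult_le_pos; [unfold t; lra|].
      assert (s / t <= 1); [|lra]. apply (Rmult_le_reg_r t); [unfold t; lra|].
      field_simplify; unfold t; lra. }
    nra.
Qed.

Lemma phi_small s x d : 0 < s -> 0 < x -> Rabs (x - s) < d -> d <= s / 2 -> phi s x <= 2 * d^2 / s.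
Proof. intros Hs Hx Hd Hds. eapply Rle_trans; [apply phi_quad; auto|].
  apply Rabs_def2 in Hd. destruct Hd as [Hd1 Hd2].
  assert ((x - s)^2 <= d^2) by nra.
  assert (x >= s / 2) by lra.
  unfold Rdiv. apply Rle_trans with (d^2 * / x).
  - apply Rmult_le_compat_r; [left; apply Rinv_0_lt_compat; auto| auto].
  - replace (2 * d^2 * / s) with (d^2 * / (s/2)) by (field; lra).
    apply Rmult_le_compat_l; [nra|].
    apply Rinv_le_contravar; lra.
Qed.


Lemma Rabs_le_inv a b : Rabs a <= b -> - b <= a <= b.
Proof. unfold Rabs; destruct (Rcase_abs a); lra. Qed.

Lemma inf_approx (V : R -> R) : (forall t, 0 <= t -> 0 <= V t) ->
  exists L, (forall t, 0 <= t -> L <= V t) /\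
    (forall d, 0 < d -> exists t0, 0 <= t0 /\ V t0 < L + d).
Proof.
  intros HV. set (E := fun y => exists t, 0 <= t /\ y = - V t).
  assert (Bd : bound E). { exists 0. intros y [t [Ht ->]]. specialize (HV t Ht). lra. }
  assert (Ne : exists y, E y). { exists (- V 0). exists 0; split; [lra|auto]. }
  destruct (completeness E Bd Ne) as [Ls [H1 H2]].
  exists (- Ls). split.
  - intros t Ht. assert (- V t <= Ls) by (apply H1; exists t; auto). lra.
  - intros d Hd. apply NNPP; intro Hn.
    assert (Ls <= Ls - d); [|lra]. apply H2. intros y [t [Ht ->]].
    assert (~ V t < - Ls + d) by (intro; apply Hn; exists t; auto). lra.
Qed.

Lemma drop_conv (V g : R -> R) K c :
  0 < K -> 0 < c -> (forall t, 0 <= t -> 0 <= V t) ->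
  (forall a b e, 0 <= a <= b -> 0 <= e -> (forall s, a <= s <= b -> e <= Rabs (g s)) ->
     V b <= V a - c * e^2 * (b - a)) ->
  (forall a b, 0 <= a <= b -> Rabs (g b - g a) <= K * (b - a)) ->
  forall eps, 0 < eps -> exists T, forall t, T <= t -> Rabs (g t) < eps.
Proof.
  intros HK Hc HV0 HV HL eps He.
  destruct (inf_approx V HV0) as [L [HL1 HL2]].
  set (tau := eps / (2 * K)).
  assert (Htau : 0 < tau) by (unfold tau; apply Rdiv_lt_0_compat; lra).
  set (d := c * (eps/2)^2 * tau).
  assert (Hd : 0 < d) by (unfold d; apply Rmult_lt_0_compat; [apply Rmult_lt_0_compat; [lra|]; nra| auto]).
  destruct (HL2 d Hd) as [t0 [Ht0 Hv0]].
  exists t0. intros t Ht. apply Rnot_le_lt; intro Hg.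
  assert (A : forall s, t <= s <= t + tau -> eps/2 <= Rabs (g s)).
  { intros s Hs. pose proof (HL t s ltac:(lra)).
    assert (K * (s - t) <= eps / 2).
    { assert (K * tau = eps / 2) by (unfold tau; field; lra). nra. }
    pose proof (Rabs_triang_inv (g t) (g s)). rewrite <- Rabs_Ropp in H.
    replace (- (g s - g t)) with (g t - g s) in H by ring. lra. }
  pose proof (HV t (t + tau) (eps/2) ltac:(lra) ltac:(lra) A).
  pose proof (HV t0 t 0 ltac:(lra) ltac:(lra) ltac:(intros; apply Rabs_pos)).
  pose proof (HL1 (t + tau) ltac:(lra)).
  replace (t + tau - t) with tau in H by ring. fold d in H. nra.
Qed.

Lemma z_conv (g h z : R -> R) K q c :
  0 < K -> 0 < q -> 0 < c ->
  (forall eps, 0 < eps -> exists T, forall t, T <= t -> Rabs (g t) < eps) ->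
  (forall eps, 0 < eps -> exists T, forall t, T <= t -> Rabs (h t) < eps) ->
  (forall a b, 0 <= a <= b -> Rabs (z b - z a) <= K * (b - a)) ->
  (forall a b e, 0 <= a <= b -> 0 < e -> (forall s, a <= s <= b -> e <= z s /\ Rabs (h s) <= q * e) ->
     g b <= g a - c * e * (b - a)) ->
  (forall a b e, 0 <= a <= b -> 0 < e -> (forall s, a <= s <= b -> z s <= - e /\ Rabs (h s) <= q * e) ->
     g a + c * e * (b - a) <= g b) ->
  forall eps, 0 < eps -> exists T, forall t, T <= t -> Rabs (z t) < eps.
Proof.
  intros HK Hq Hc Hg Hh HL H1 H2 eps He.
  set (tau := eps / (2 * K)).
  assert (Htau : 0 < tau) by (unfold tau; apply Rdiv_lt_0_compat; lra).
  set (d := c * (eps/2) * tau).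
  assert (Hd : 0 < d) by (unfold d; apply Rmult_lt_0_compat; [apply Rmult_lt_0_compat; lra| auto]).
  destruct (Hg (d/2) ltac:(lra)) as [T1 HT1].
  destruct (Hh (q * (eps/2)) ltac:(nra)) as [T2 HT2].
  exists (Rmax 0 (Rmax T1 T2)). intros t Ht.
  assert (0 <= t /\ T1 <= t /\ T2 <= t) as [Ht0 [Ht1 Ht2]].
  { pose proof (Rmax_l 0 (Rmax T1 T2)). pose proof (Rmax_r 0 (Rmax T1 T2)).
    pose proof (Rmax_l T1 T2). pose proof (Rmax_r T1 T2). lra. }
  apply Rnot_le_lt; intro Hz.
  assert (A : forall s, t <= s <= t + tau -> Rabs (z s - z t) <= eps / 2).
  { intros s Hs. pose proof (HL t s ltac:(lra)).
    assert (K * tau = eps / 2) by (unfold tau; field; lra). nra. }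
  assert (Hhs : forall s, t <= s -> Rabs (h s) <= q * (eps / 2)).
  { intros s Hs. left. apply HT2. lra. }
  pose proof (HT1 t Ht1) as G1. pose proof (HT1 (t + tau) ltac:(lra)) as G2.
  apply Rabs_def2 in G1. apply Rabs_def2 in G2.
  unfold Rabs in Hz. destruct (Rcase_abs (z t)).
  - assert (B : forall s, t <= s <= t + tau -> z s <= - (eps/2) /\ Rabs (h s) <= q * (eps/2)).
    { intros s Hs. split; [|apply Hhs; lra]. specialize (A s Hs). apply Rabs_le_inv in A. lra. }
    pose proof (H2 t (t + tau) (eps/2) ltac:(lra) ltac:(lra) B).
    replace (t + tau - t) with tau in H by ring. fold d in H. lra.
  - assert (B : forall s, t <= s <= t + tau -> eps/2 <= z s /\ Rabs (h s) <= q * (eps/2)).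
    { intros s Hs. split; [|apply Hhs; lra]. specialize (A s Hs). apply Rabs_le_inv in A. lra. }
    pose proof (H1 t (t + tau) (eps/2) ltac:(lra) ltac:(lra) B).
    replace (t + tau - t) with tau in H by ring. fold d in H. lra.
Qed.

Lemma lim_of (f : R -> R) l :
  (forall eps, 0 < eps -> exists T, forall t, T <= t -> Rabs (f t - l) < eps) ->
  is_lim f p_infty l.
Proof.
  intros H. apply is_lim_spec. intros eps. destruct (H eps (cond_pos eps)) as [T HT].
  exists T. intros x Hx. apply HT. lra.
Qed.


Lemma phi_derive s f t df : 0 < f t -> is_derive f t df ->
  is_derive (fun t => phi s (f t)) t (df * (1 - s / f t)).
Proof.
  intros Hp Hd.
  assert (is_derive (phi s) (f t) (1 - s / f t)).
  { unfold phi. auto_derive; [lra|]. field. lra. }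
  pose proof (is_derive_comp (phi s) f t _ _ H Hd). exact H0.
Qed.

Lemma mvt f df a b : a <= b -> (forall x, a <= x <= b -> is_derive f x (df x)) ->
  exists c, a <= c <= b /\ f b - f a = df c * (b - a).
Proof.
  intros Hab Hd.
  destruct (MVT_gen f a b df) as [c [Hc E]].
  - intros x Hx. rewrite Rmin_left in Hx by lra. rewrite Rmax_right in Hx by lra. apply Hd; lra.
  - intros x Hx. rewrite Rmin_left in Hx by lra. rewrite Rmax_right in Hx by lra.
    apply derivable_continuous_pt. exists (df x). apply is_derive_Reals, Hd; lra.
  - rewrite Rmin_left in Hc by lra. rewrite Rmax_right in Hc by lra. exists c; auto.
Qed.

Lemma incr f df a b : a <= b -> (forall x, a <= x <= b -> is_derive f x (df x)) ->
  (forall x, a <= x <= b -> 0 <= df x) -> f a <= f b.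
Proof. intros Hab Hd Hs. destruct (mvt f df a b Hab Hd) as [c [Hc E]].
  assert (0 <= df c) by (apply Hs; lra). nra. Qed.

Lemma lip f df a b K : a <= b -> (forall x, a <= x <= b -> is_derive f x (df x)) ->
  (forall x, a <= x <= b -> Rabs (df x) <= K) -> Rabs (f b - f a) <= K * (b - a).
Proof. intros Hab Hd Hs. destruct (mvt f df a b Hab Hd) as [c [Hc E]].
  rewrite E, Rabs_mult, (Rabs_right (b - a)) by lra.
  apply Rmult_le_compat_r; [lra|]. apply Hs; lra. Qed.


Lemma dist3_lt x y z a b c d : dist3 x y z a b c < d ->
  Rabs (x - a) < d /\ Rabs (y - b) < d /\ Rabs (z - c) < d.
Proof. unfold dist3. intros H.
  pose proof (Rmax_l (Rabs (x - a)) (Rmax (Rabs (y - b)) (Rabs (z - c)))).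
  pose proof (Rmax_r (Rabs (x - a)) (Rmax (Rabs (y - b)) (Rabs (z - c)))).
  pose proof (Rmax_l (Rabs (y - b)) (Rabs (z - c))).
  pose proof (Rmax_r (Rabs (y - b)) (Rabs (z - c))). lra. Qed.

Lemma dist3_of x y z a b c d : Rabs (x - a) < d -> Rabs (y - b) < d -> Rabs (z - c) < d ->
  dist3 x y z a b c < d.
Proof. intros. unfold dist3. apply Rmax_lub_lt; auto. apply Rmax_lub_lt; auto. Qed.

Lemma sq_le x : 0 <= x <= 1 -> x^2 <= x.
Proof. intros. nra. Qed.

Lemma mult_bound C d m : 0 < C -> d <= m / (2 * C) -> C * d <= m / 2.
Proof. intros HC Hd. apply (Rmult_le_compat_l C) in Hd; [|lra].
  replace (C * (m / (2 * C))) with (m / 2) in Hd by (field; lra). lra. Qed.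

Lemma fu_bound r1 a12 a13 x y z M : 0 < r1 -> 0 < a12 -> 0 < a13 ->
  0 < x <= M -> 0 < y <= M -> 0 < z <= M ->
  Rabs (fu r1 a12 a13 x y z) <= r1 * M * (1 + M) + a12 * M * M + a13 * M * M.
Proof. intros. unfold fu. apply Rabs_le.
  assert (x * x <= M * M) by nra. assert (x * y <= M * M) by nra. assert (x * z <= M * M) by nra.
  assert (0 <= x * y) by nra. assert (0 <= x * z) by nra. assert (0 <= x * x) by nra.
  split; nra. Qed.

Lemma fv_bound r2 a21 x y z M : 0 < r2 -> 0 < a21 ->
  0 < x <= M -> 0 < y <= M -> 0 < z <= M ->
  Rabs (fv r2 a21 x y z) <= r2 * M * (1 + M) + a21 * M * M.
Proof. intros. unfold fv. apply Rabs_le.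
  assert (y * y <= M * M) by nra. assert (x * y <= M * M) by nra.
  assert (0 <= x * y) by nra. assert (0 <= y * y) by nra.
  split; nra. Qed.

Lemma fw_bound mu a31 x y z M : 0 < mu -> 0 < a31 ->
  0 < x <= M -> 0 < y <= M -> 0 < z <= M ->
  Rabs (fw mu a31 x y z) <= mu * M + a31 * M * M.
Proof. intros. unfold fw. apply Rabs_le.
  assert (x * z <= M * M) by nra. assert (0 <= x * z) by nra.
  split; nra. Qed.

Lemma pos3 a b c M : 0 < a -> 0 < b -> 0 < c -> 0 < M -> 0 < a * M * (1 + M) + b * M * M + c * M * M.
Proof. intros. assert (0 < a * M * (1 + M)) by (apply Rmult_lt_0_compat; nra).
  assert (0 < b * M * M) by (apply Rmult_lt_0_compat; nra).
  assert (0 < c * M * M) by (apply Rmult_lt_0_compat; nra). lra. Qed.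

Lemma pos2 a b M : 0 < a -> 0 < b -> 0 < M -> 0 < a * M * (1 + M) + b * M * M.
Proof. intros. assert (0 < a * M * (1 + M)) by (apply Rmult_lt_0_compat; nra).
  assert (0 < b * M * M) by (apply Rmult_lt_0_compat; nra). lra. Qed.

Lemma pos2' a b M : 0 < a -> 0 < b -> 0 < M -> 0 < a * M + b * M * M.
Proof. intros. assert (0 < a * M) by (apply Rmult_lt_0_compat; nra).
  assert (0 < b * M * M) by (apply Rmult_lt_0_compat; nra). lra. Qed.

Lemma sq_abs_le e x : 0 <= e -> e <= Rabs x -> e^2 <= x^2.
Proof. intros. rewrite <- (pow2_abs x). pose proof (Rabs_pos x). nra. Qed.

Lemma h_small r1 a12 x y eps : 0 < r1 -> 0 < a12 -> 0 < eps ->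
  Rabs x < eps / (2 * r1) -> Rabs y < eps / (2 * a12) -> Rabs (- r1 * x - a12 * y) < eps.
Proof. intros. apply Rabs_def2 in H2. apply Rabs_def2 in H3. destruct H2, H3.
  assert (r1 * (eps / (2 * r1)) = eps / 2) by (field; lra).
  assert (a12 * (eps / (2 * a12)) = eps / 2) by (field; lra).
  apply Rabs_def1; nra. Qed.

Lemma key_neg U H Z mlo a13 e : 0 < mlo <= U -> 0 < a13 -> 0 < e -> e <= Z -> Rabs H <= a13 / 2 * e ->
  U * (H - a13 * Z) + mlo * a13 / 2 * e <= 0.
Proof. intros. apply Rabs_le_between in H4 || (unfold Rabs in H4; destruct (Rcase_abs H)).
  all: try (assert (H - a13 * Z <= - (a13 / 2 * e)) by nra; nra). Qed.

Lemma key_pos U H Z mlo a13 e : 0 < mlo <= U -> 0 < a13 -> 0 < e -> Z <= - e -> Rabs H <= a13 / 2 * e ->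
  0 <= U * (H - a13 * Z) - mlo * a13 / 2 * e.
Proof. intros. unfold Rabs in H4; destruct (Rcase_abs H).
  all: assert (H - a13 * Z >= a13 / 2 * e) by nra; nra. Qed.

Lemma deriv_add_lin f df k x : is_derive f x df -> is_derive (fun s => f s + k * s) x (df + k).
Proof. intros H. assert (H0 : is_derive (fun s => k * s) x k) by (auto_derive; auto; ring).
  exact (is_derive_plus _ _ _ _ _ H H0). Qed.


Ltac neq := repeat split; try (apply Rgt_not_eq; lra); try (apply Rgt_not_eq; nra).

Theorem theorem2 (r1 r2 mu a12 a13 a21 a31 : R)
  (Hr1 : 0 < r1) (Hr2 : 0 < r2) (Hmu : 0 < mu) (Ha12 : 0 < a12)
  (Ha13 : 0 < a13) (Ha21 : 0 < a21) (Ha31 : 0 < a31)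
  (Hcond : r1 * r2 * a31 - r1 * r2 * mu - a12 * a31 * r2 - a12 * a21 * mu > 0) :
  let us := ustar mu a31 in
  let vs := vstar r2 mu a21 a31 in
  let ws := wstar r1 r2 mu a12 a13 a21 a31 in
  (0 < us /\ 0 < vs /\ 0 < ws /\
   fu r1 a12 a13 us vs ws = 0 /\ fv r2 a21 us vs ws = 0 /\ fw mu a31 us vs ws = 0) /\
  (forall eps, 0 < eps -> exists delta, 0 < delta /\
     forall u v w : R -> R,
       is_solution r1 r2 mu a12 a13 a21 a31 u v w ->
       0 < u 0 -> 0 < v 0 -> 0 < w 0 ->
       dist3 (u 0) (v 0) (w 0) us vs ws < delta ->
       forall t, 0 <= t -> dist3 (u t) (v t) (w t) us vs ws < eps) /\
  (forall u v w : R -> R,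
     is_solution r1 r2 mu a12 a13 a21 a31 u v w ->
     0 < u 0 -> 0 < v 0 -> 0 < w 0 ->
     is_lim u p_infty us /\ is_lim v p_infty vs /\ is_lim w p_infty ws).
Proof.
  intros us vs ws.
  assert (Hus : 0 < us) by (unfold us, ustar; apply Rdiv_lt_0_compat; lra).
  assert (Hvs : 0 < vs).
  { unfold vs, vstar. assert (0 < a21 * mu / (a31 * r2)) by (apply Rdiv_lt_0_compat; nra). lra. }
  assert (Hws : 0 < ws) by (unfold ws, wstar; apply Rdiv_lt_0_compat; [lra| repeat apply Rmult_lt_0_compat; lra]).
  assert (Eu : r1 * (1 - us) - a12 * vs - a13 * ws = 0)
    by (unfold us, vs, ws, ustar, vstar, wstar; field; neq).
  assert (Ev : r2 * (1 - vs) + a21 * us = 0) by (unfold us, vs, ustar, vstar; field; neq).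
  assert (Ew : - mu + a31 * us = 0) by (unfold us, ustar; field; neq).
  assert (FU : forall x y z, fu r1 a12 a13 x y z = x * (- r1 * (x - us) - a12 * (y - vs) - a13 * (z - ws))).
  { intros. unfold fu. replace (r1 * x * (1 - x) - a12 * x * y - a13 * x * z)
      with (x * (- r1 * (x - us) - a12 * (y - vs) - a13 * (z - ws)) + x * (r1 * (1 - us) - a12 * vs - a13 * ws)) by ring.
    rewrite Eu; ring. }
  assert (FV : forall x y z, fv r2 a21 x y z = y * (- r2 * (y - vs) + a21 * (x - us))).
  { intros. unfold fv. replace (r2 * y * (1 - y) + a21 * x * y)
      with (y * (- r2 * (y - vs) + a21 * (x - us)) + y * (r2 * (1 - vs) + a21 * us)) by ring.
    rewrite Ev; ring. }
  assert (FW : forall x y z, fw mu a31 x y z = z * (a31 * (x - us))).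
  { intros. unfold fw. replace (- mu * z + a31 * x * z) with (z * (a31 * (x - us)) + z * (- mu + a31 * us)) by ring.
    rewrite Ew; ring. }
  split.
  { repeat split; auto; [rewrite FU|rewrite FV|rewrite FW]; ring. }
  set (c2 := a12 / a21). set (c3 := a13 / a31).
  assert (Hc2 : 0 < c2) by (unfold c2; apply Rdiv_lt_0_compat; lra).
  assert (Hc3 : 0 < c3) by (unfold c3; apply Rdiv_lt_0_compat; lra).
  set (Vf := fun (u v w : R -> R) t => phi us (u t) + c2 * phi vs (v t) + c3 * phi ws (w t)).
  assert (KD : forall u v w, is_solution r1 r2 mu a12 a13 a21 a31 u v w ->
     forall t, 0 <= t -> 0 < u t -> 0 < v t -> 0 < w t ->
     is_derive (Vf u v w) t (- r1 * (u t - us)^2 - c2 * r2 * (v t - vs)^2)).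
  { intros u v w Hs t Ht Hu Hv Hw. destruct (Hs t Ht) as [Du [Dv Dw]].
    pose proof (phi_derive us u t _ Hu Du) as P1.
    pose proof (phi_derive vs v t _ Hv Dv) as P2.
    pose proof (phi_derive ws w t _ Hw Dw) as P3.
    apply (is_derive_scal _ _ c2 _) in P2. apply (is_derive_scal _ _ c3 _) in P3.
    pose proof (is_derive_plus _ _ _ _ _ (is_derive_plus _ _ _ _ _ P1 P2) P3) as P.
    replace (- r1 * (u t - us)^2 - c2 * r2 * (v t - vs)^2) with
      (plus (plus (fu r1 a12 a13 (u t) (v t) (w t) * (1 - us / u t))
        (c2 * (fv r2 a21 (u t) (v t) (w t) * (1 - vs / v t))))
        (c3 * (fw mu a31 (u t) (v t) (w t) * (1 - ws / w t)))).
    - eapply is_derive_ext; [|exact P]. intros; reflexivity.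
    - unfold plus; simpl. rewrite FU, FV, FW. unfold c2, c3. field. neq. }
  assert (POS : forall u v w, is_solution r1 r2 mu a12 a13 a21 a31 u v w ->
     0 < u 0 -> 0 < v 0 -> 0 < w 0 ->
     forall t, 0 <= t -> (0 < u t /\ 0 < v t /\ 0 < w t) /\ Vf u v w t <= Vf u v w 0).
  { intros u v w Hs Hu0 Hv0 Hw0.
    set (B := Vf u v w 0).
    assert (DEC : forall a b, 0 <= a <= b -> (forall s, a <= s <= b -> 0 < u s /\ 0 < v s /\ 0 < w s) ->
       Vf u v w b <= Vf u v w a).
    { intros a b Hab Hp.
      apply (decr (Vf u v w) (fun s => - r1 * (u s - us)^2 - c2 * r2 * (v s - vs)^2)); [lra| |].
      - intros x Hx. destruct (Hp x Hx) as [? [? ?]]. apply KD; auto; lra.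
      - intros x Hx. pose proof (pow2_ge_0 (u x - us)). pose proof (pow2_ge_0 (v x - vs)).
        assert (0 <= r1 * (u x - us)^2) by (apply Rmult_le_pos; lra).
        assert (0 <= c2 * r2 * (v x - vs)^2) by (apply Rmult_le_pos; [apply Rmult_le_pos|]; lra). lra. }
    assert (VB : forall t, 0 < u t -> 0 < v t -> 0 < w t -> Vf u v w t <= B ->
       phi us (u t) <= B /\ phi vs (v t) <= B / c2 /\ phi ws (w t) <= B / c3).
    { intros t Hu Hv Hw HB. unfold Vf in HB.
      pose proof (phi_nonneg us (u t) Hus Hu). pose proof (phi_nonneg vs (v t) Hvs Hv).
      pose proof (phi_nonneg ws (w t) Hws Hw).
      assert (0 <= c2 * phi vs (v t)) by (apply Rmult_le_pos; lra).
      assert (0 <= c3 * phi ws (w t)) by (apply Rmult_le_pos; lra).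
      split; [lra|split].
      - apply (Rmult_le_reg_l c2); auto. replace (c2 * (B / c2)) with B by (field; lra). lra.
      - apply (Rmult_le_reg_l c3); auto. replace (c3 * (B / c3)) with B by (field; lra). lra. }
    set (m := Rmin (us * exp (-(B+us)/us)) (Rmin (vs * exp (-(B/c2 + vs)/vs)) (ws * exp (-(B/c3+ws)/ws)))).
    assert (Hm : 0 < m).
    { unfold m. pose proof (exp_pos (-(B+us)/us)). pose proof (exp_pos (-(B/c2 + vs)/vs)).
      pose proof (exp_pos (-(B/c3+ws)/ws)).
      apply Rmin_pos; [|apply Rmin_pos]; apply Rmult_lt_0_compat; auto. }
    assert (P : forall t, 0 <= t -> 0 < u t /\ 0 < v t /\ 0 < w t).
    { apply (stay_pos u v w m); auto.
      - intros t Ht. destruct (Hs t Ht) as [Du [Dv Dw]]. unfold cont_at.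
        split; [|split]; intros eps He; eapply deriv_cont; eauto.
      - intros t Ht Hp. assert (HV : Vf u v w t <= B) by (apply DEC; [lra| exact Hp]).
        destruct (Hp t ltac:(lra)) as [Hu [Hv Hw]].
        destruct (VB t Hu Hv Hw HV) as [B1 [B2 B3]].
        pose proof (phi_lower _ _ _ Hus Hu B1). pose proof (phi_lower _ _ _ Hvs Hv B2).
        pose proof (phi_lower _ _ _ Hws Hw B3).
        pose proof (Rmin_l (us * exp (-(B+us)/us)) (Rmin (vs * exp (-(B/c2 + vs)/vs)) (ws * exp (-(B/c3+ws)/ws)))).
        pose proof (Rmin_r (us * exp (-(B+us)/us)) (Rmin (vs * exp (-(B/c2 + vs)/vs)) (ws * exp (-(B/c3+ws)/ws)))).
        pose proof (Rmin_l (vs * exp (-(B/c2 + vs)/vs)) (ws * exp (-(B/c3+ws)/ws))).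
        pose proof (Rmin_r (vs * exp (-(B/c2 + vs)/vs)) (ws * exp (-(B/c3+ws)/ws))).
        fold m in H2, H3. lra. }
    intros t Ht. split; [apply P; auto|]. apply DEC; [lra|]. intros; apply P; lra. }
  split.
  { intros eps Heps.
    set (e := Rmin (Rmin eps (us/2)) (Rmin (vs/2) (ws/2))).
    assert (He : 0 < e /\ e <= eps /\ e <= us/2 /\ e <= vs/2 /\ e <= ws/2).
    { unfold e. pose proof (Rmin_l (Rmin eps (us/2)) (Rmin (vs/2) (ws/2))).
      pose proof (Rmin_r (Rmin eps (us/2)) (Rmin (vs/2) (ws/2))).
      pose proof (Rmin_l eps (us/2)). pose proof (Rmin_r eps (us/2)).
      pose proof (Rmin_l (vs/2) (ws/2)). pose proof (Rmin_r (vs/2) (ws/2)).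
      repeat split; try lra. apply Rmin_pos; apply Rmin_pos; lra. }
    destruct He as [He0 [Hee [Heu [Hev Hew]]]].
    set (m1 := Rmin (phi us (us + e)) (phi us (us - e))).
    set (m2 := Rmin (phi vs (vs + e)) (phi vs (vs - e))).
    set (m3 := Rmin (phi ws (ws + e)) (phi ws (ws - e))).
    assert (Hm1 : 0 < m1) by (unfold m1; apply Rmin_pos; apply phi_pos; lra).
    assert (Hm2 : 0 < m2) by (unfold m2; apply Rmin_pos; apply phi_pos; lra).
    assert (Hm3 : 0 < m3) by (unfold m3; apply Rmin_pos; apply phi_pos; lra).
    set (m := Rmin m1 (Rmin (c2 * m2) (c3 * m3))).
    assert (Hm : 0 < m) by (unfold m; apply Rmin_pos; [|apply Rmin_pos; apply Rmult_lt_0_compat]; auto).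
    assert (Hmi : m <= m1 /\ m <= c2 * m2 /\ m <= c3 * m3).
    { unfold m. pose proof (Rmin_l m1 (Rmin (c2 * m2) (c3 * m3))).
      pose proof (Rmin_r m1 (Rmin (c2 * m2) (c3 * m3))).
      pose proof (Rmin_l (c2 * m2) (c3 * m3)). pose proof (Rmin_r (c2 * m2) (c3 * m3)). lra. }
    set (C := 2 / us + c2 * (2 / vs) + c3 * (2 / ws)).
    assert (HC : 0 < C).
    { unfold C. assert (0 < 2 / us) by (apply Rdiv_lt_0_compat; lra).
      assert (0 < c2 * (2 / vs)) by (apply Rmult_lt_0_compat; [|apply Rdiv_lt_0_compat]; lra).
      assert (0 < c3 * (2 / ws)) by (apply Rmult_lt_0_compat; [|apply Rdiv_lt_0_compat]; lra). lra. }
    set (delta := Rmin (Rmin 1 (us/2)) (Rmin (Rmin (vs/2) (ws/2)) (m / (2 * C)))).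
    assert (Hd : 0 < delta /\ delta <= 1 /\ delta <= us/2 /\ delta <= vs/2 /\ delta <= ws/2 /\ delta <= m/(2*C)).
    { unfold delta.
      pose proof (Rmin_l (Rmin 1 (us/2)) (Rmin (Rmin (vs/2) (ws/2)) (m / (2 * C)))).
      pose proof (Rmin_r (Rmin 1 (us/2)) (Rmin (Rmin (vs/2) (ws/2)) (m / (2 * C)))).
      pose proof (Rmin_l 1 (us/2)). pose proof (Rmin_r 1 (us/2)).
      pose proof (Rmin_l (Rmin (vs/2) (ws/2)) (m / (2 * C))).
      pose proof (Rmin_r (Rmin (vs/2) (ws/2)) (m / (2 * C))).
      pose proof (Rmin_l (vs/2) (ws/2)). pose proof (Rmin_r (vs/2) (ws/2)).
      repeat split; try lra.
      assert (0 < m / (2 * C)) by (apply Rdiv_lt_0_compat; lra).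
      repeat apply Rmin_pos; lra. }
    destruct Hd as [Hd0 [Hd1 [Hdu [Hdv [Hdw HdC]]]]].
    exists delta. split; [exact Hd0|].
    intros u v w Hs Hu0 Hv0 Hw0 Hdist t Ht.
    destruct (dist3_lt _ _ _ _ _ _ _ Hdist) as [D1 [D2 D3]].
    assert (V0 : Vf u v w 0 < m).
    { unfold Vf.
      pose proof (phi_small us (u 0) delta Hus Hu0 D1 Hdu).
      pose proof (phi_small vs (v 0) delta Hvs Hv0 D2 Hdv).
      pose proof (phi_small ws (w 0) delta Hws Hw0 D3 Hdw).
      assert (c2 * phi vs (v 0) <= c2 * (2 * delta^2 / vs)) by (apply Rmult_le_compat_l; lra).
      assert (c3 * phi ws (w 0) <= c3 * (2 * delta^2 / ws)) by (apply Rmult_le_compat_l; lra).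
      assert (E : 2 * delta^2 / us + c2 * (2 * delta^2 / vs) + c3 * (2 * delta^2 / ws) = C * delta^2)
        by (unfold C; field; neq).
      assert (C * delta^2 <= C * delta) by (apply Rmult_le_compat_l; [lra| apply sq_le; lra]).
      pose proof (mult_bound C delta m HC HdC). lra. }
    destruct (POS u v w Hs Hu0 Hv0 Hw0 t Ht) as [[Hu [Hv Hw]] Vt].
    assert (Vtm : Vf u v w t < m) by lra.
    unfold Vf in Vtm; cbv beta in Vtm.
    pose proof (phi_nonneg us (u t) Hus Hu). pose proof (phi_nonneg vs (v t) Hvs Hv).
    pose proof (phi_nonneg ws (w t) Hws Hw).
    assert (0 <= c2 * phi vs (v t)) by (apply Rmult_le_pos; lra).
    assert (0 <= c3 * phi ws (w t)) by (apply Rmult_le_pos; lra).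
    apply dist3_of; apply Rnot_le_lt; intro Hc.
    - pose proof (phi_away us (u t) e Hus ltac:(lra) Hu ltac:(lra)) as PA. fold m1 in PA. lra.
    - pose proof (phi_away vs (v t) e Hvs ltac:(lra) Hv ltac:(lra)) as PA. fold m2 in PA.
      assert (c2 * m2 <= c2 * phi vs (v t)) by (apply Rmult_le_compat_l; lra). lra.
    - pose proof (phi_away ws (w t) e Hws ltac:(lra) Hw ltac:(lra)) as PA. fold m3 in PA.
      assert (c3 * m3 <= c3 * phi ws (w t)) by (apply Rmult_le_compat_l; lra). lra. }
  intros u v w Hs Hu0 Hv0 Hw0.
  pose proof (POS u v w Hs Hu0 Hv0 Hw0) as PS.
  set (B := Vf u v w 0).
  assert (VNN : forall t, 0 <= t -> 0 <= Vf u v w t).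
  { intros t Ht. destruct (PS t Ht) as [[Hu [Hv Hw]] _]. unfold Vf.
    pose proof (phi_nonneg us (u t) Hus Hu). pose proof (phi_nonneg vs (v t) Hvs Hv).
    pose proof (phi_nonneg ws (w t) Hws Hw).
    assert (0 <= c2 * phi vs (v t)) by (apply Rmult_le_pos; lra).
    assert (0 <= c3 * phi ws (w t)) by (apply Rmult_le_pos; lra). lra. }
  assert (HB : 0 <= B) by (apply VNN; lra).
  assert (HB2 : 0 <= B / c2) by (apply Rmult_le_pos; [lra| left; apply Rinv_0_lt_compat; lra]).
  assert (HB3 : 0 <= B / c3) by (apply Rmult_le_pos; [lra| left; apply Rinv_0_lt_compat; lra]).
  set (M := 2 * (B + us) + 2 * (B / c2 + vs) + 2 * (B / c3 + ws)).
  assert (HM : 0 < M) by (unfold M; lra).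
  set (mlo := us * exp (-(B+us)/us)).
  assert (Hmlo : 0 < mlo) by (unfold mlo; apply Rmult_lt_0_compat; [lra| apply exp_pos]).
  assert (Bnd : forall t, 0 <= t -> (0 < u t <= M) /\ (0 < v t <= M) /\ (0 < w t <= M) /\ mlo <= u t).
  { intros t Ht. destruct (PS t Ht) as [[Hu [Hv Hw]] Vt]. fold B in Vt. unfold Vf in Vt; cbv beta in Vt.
    pose proof (phi_nonneg us (u t) Hus Hu). pose proof (phi_nonneg vs (v t) Hvs Hv).
    pose proof (phi_nonneg ws (w t) Hws Hw).
    assert (0 <= c2 * phi vs (v t)) by (apply Rmult_le_pos; lra).
    assert (0 <= c3 * phi ws (w t)) by (apply Rmult_le_pos; lra).
    assert (B1 : phi us (u t) <= B) by lra.
    assert (B2 : phi vs (v t) <= B / c2).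
    { apply (Rmult_le_reg_l c2); auto. replace (c2 * (B / c2)) with B by (field; lra). lra. }
    assert (B3 : phi ws (w t) <= B / c3).
    { apply (Rmult_le_reg_l c3); auto. replace (c3 * (B / c3)) with B by (field; lra). lra. }
    pose proof (phi_upper _ _ _ Hus Hu B1). pose proof (phi_upper _ _ _ Hvs Hv B2).
    pose proof (phi_upper _ _ _ Hws Hw B3). pose proof (phi_lower _ _ _ Hus Hu B1).
    fold mlo in H7. unfold M. repeat split; lra. }
  set (Ku := r1 * M * (1 + M) + a12 * M * M + a13 * M * M).
  set (Kv := r2 * M * (1 + M) + a21 * M * M).
  set (Kw := mu * M + a31 * M * M).
  assert (HKu : 0 < Ku) by (apply pos3; auto).
  assert (HKv : 0 < Kv) by (apply pos2; auto).
  assert (HKw : 0 < Kw) by (apply pos2'; auto).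
  assert (LU : forall a b, 0 <= a <= b -> Rabs ((u b - us) - (u a - us)) <= Ku * (b - a)).
  { intros a b Hab. replace ((u b - us) - (u a - us)) with (u b - u a) by ring.
    apply (lip u (fun s => fu r1 a12 a13 (u s) (v s) (w s))); [lra| |].
    - intros x Hx. apply (Hs x); lra.
    - intros x Hx. destruct (Bnd x ltac:(lra)) as [? [? [? ?]]]. apply fu_bound; auto. }
  assert (LV : forall a b, 0 <= a <= b -> Rabs ((v b - vs) - (v a - vs)) <= Kv * (b - a)).
  { intros a b Hab. replace ((v b - vs) - (v a - vs)) with (v b - v a) by ring.
    apply (lip v (fun s => fv r2 a21 (u s) (v s) (w s))); [lra| |].
    - intros x Hx. apply (Hs x); lra.
    - intros x Hx. destruct (Bnd x ltac:(lra)) as [? [? [? ?]]]. apply fv_bound; auto. }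
  assert (LW : forall a b, 0 <= a <= b -> Rabs ((w b - ws) - (w a - ws)) <= Kw * (b - a)).
  { intros a b Hab. replace ((w b - ws) - (w a - ws)) with (w b - w a) by ring.
    apply (lip w (fun s => fw mu a31 (u s) (v s) (w s))); [lra| |].
    - intros x Hx. apply (Hs x); lra.
    - intros x Hx. destruct (Bnd x ltac:(lra)) as [? [? [? ?]]]. apply fw_bound; auto. }
  assert (DV : forall a b k, 0 <= a <= b ->
     (forall s, a <= s <= b -> - r1 * (u s - us)^2 - c2 * r2 * (v s - vs)^2 + k <= 0) ->
     Vf u v w b <= Vf u v w a - k * (b - a)).
  { intros a b k Hab Hk.
    assert (Vf u v w b + k * b <= Vf u v w a + k * a).
    { apply (decr (fun s => Vf u v w s + k * s) (fun s => - r1 * (u s - us)^2 - c2 * r2 * (v s - vs)^2 + k)); [lra| |exact Hk].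
      intros x Hx. apply deriv_add_lin. destruct (Bnd x ltac:(lra)) as [[? ?] [[? ?] [[? ?] ?]]].
      apply KD; auto; lra. }
    replace (k * (b - a)) with (k * b - k * a) by ring. lra. }
  assert (Xc : forall eps, 0 < eps -> exists T, forall t, T <= t -> Rabs (u t - us) < eps).
  { apply (drop_conv (Vf u v w) (fun t => u t - us) Ku r1); auto.
    intros a b e Hab He Hg. apply DV; auto. intros s Hs'.
    pose proof (sq_abs_le e (u s - us) He (Hg s Hs')).
    pose proof (pow2_ge_0 (v s - vs)).
    assert (0 <= c2 * r2 * (v s - vs)^2) by (apply Rmult_le_pos; [apply Rmult_le_pos|]; lra).
    assert (r1 * e^2 <= r1 * (u s - us)^2) by (apply Rmult_le_compat_l; lra). lra. }
  assert (Yc : forall eps, 0 < eps -> exists T, forall t, T <= t -> Rabs (v t - vs) < eps).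
  { assert (Hcr : 0 < c2 * r2) by (apply Rmult_lt_0_compat; lra).
    apply (drop_conv (Vf u v w) (fun t => v t - vs) Kv (c2 * r2)); auto.
    intros a b e Hab He Hg. apply DV; auto. intros s Hs'.
    pose proof (sq_abs_le e (v s - vs) He (Hg s Hs')).
    pose proof (pow2_ge_0 (u s - us)).
    assert (0 <= r1 * (u s - us)^2) by (apply Rmult_le_pos; lra).
    assert (c2 * r2 * e^2 <= c2 * r2 * (v s - vs)^2) by (apply Rmult_le_compat_l; lra). lra. }
  assert (Hc : 0 < mlo * a13 / 2) by (apply Rmult_lt_0_compat; [apply Rmult_lt_0_compat|]; lra).
  assert (Zc : forall eps, 0 < eps -> exists T, forall t, T <= t -> Rabs (w t - ws) < eps).
  { apply (z_conv (fun t => u t - us) (fun t => - r1 * (u t - us) - a12 * (v t - vs)) (fun t => w t - ws)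
      Kw (a13 / 2) (mlo * a13 / 2)); auto; try lra.
    - intros eps He. destruct (Xc (eps / (2 * r1))) as [T1 H1]; [apply Rdiv_lt_0_compat; lra|].
      destruct (Yc (eps / (2 * a12))) as [T2 H2]; [apply Rdiv_lt_0_compat; lra|].
      exists (Rmax T1 T2). intros t Ht. pose proof (Rmax_l T1 T2). pose proof (Rmax_r T1 T2).
      apply h_small; auto; [apply H1| apply H2]; lra.
    - intros a b e Hab He Hz.
      assert (u b + (mlo * a13 / 2 * e) * b <= u a + (mlo * a13 / 2 * e) * a).
      { apply (decr (fun s => u s + (mlo * a13 / 2 * e) * s)
          (fun s => fu r1 a12 a13 (u s) (v s) (w s) + mlo * a13 / 2 * e)); [lra| |].
        - intros x Hx. apply deriv_add_lin. apply (Hs x); lra.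
        - intros x Hx. destruct (Bnd x ltac:(lra)) as [_ [_ [_ Hm]]]. destruct (Hz x Hx) as [Z1 Z2].
          rewrite FU.
          replace (- r1 * (u x - us) - a12 * (v x - vs) - a13 * (w x - ws)) with
            ((- r1 * (u x - us) - a12 * (v x - vs)) - a13 * (w x - ws)) by ring.
          apply key_neg; auto; lra. }
      replace (mlo * a13 / 2 * e * (b - a)) with ((mlo * a13 / 2 * e) * b - (mlo * a13 / 2 * e) * a) by ring.
      lra.
    - intros a b e Hab He Hz.
      assert (u a + (- (mlo * a13 / 2 * e)) * a <= u b + (- (mlo * a13 / 2 * e)) * b).
      { apply (incr (fun s => u s + (- (mlo * a13 / 2 * e)) * s)
          (fun s => fu r1 a12 a13 (u s) (v s) (w s) + - (mlo * a13 / 2 * e))); [lra| |].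
        - intros x Hx. apply deriv_add_lin. apply (Hs x); lra.
        - intros x Hx. destruct (Bnd x ltac:(lra)) as [_ [_ [_ Hm]]]. destruct (Hz x Hx) as [Z1 Z2].
          rewrite FU.
          replace (- r1 * (u x - us) - a12 * (v x - vs) - a13 * (w x - ws)) with
            ((- r1 * (u x - us) - a12 * (v x - vs)) - a13 * (w x - ws)) by ring.
          pose proof (key_pos (u x) _ _ mlo a13 e ltac:(lra) Ha13 He Z1 Z2). lra. }
      replace (mlo * a13 / 2 * e * (b - a)) with ((mlo * a13 / 2 * e) * b - (mlo * a13 / 2 * e) * a) by ring.
      lra. }
  split; [|split]; apply lim_of; auto.
Qed.
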